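(* Let $\pi_0$ be a fixed policy and $\epsilon>0$. For a parameterized policy $\pi_\theta$ let $\rho=\rho_\theta(a|s)=\pi_\theta(a|s)/\pi_0(a|s)$ and $$J_{PPO}(\theta)=\mathbb{E}_{s\sim d_{\pi_0},a\sim\pi_0(\cdot|s)}\left[\min\{\mathrm{clip}(\rho,1-\epsilon,1+\epsilon)A_{\pi_0}(s,a),\ \rho A_{\pi_0}(s,a)\}\right].$$ Define $J'(\theta)=\mathbb{E}_{s\sim d_{\pi_0},a\sim\pi_0(\cdot|s)}[l'(\rho_\theta(a|s))]$, where, writing $A_{\pi_0}=A_{\pi_0}(s,a)$, $$l'(\rho)=\begin{cases}|A_{\pi_0}|\cdot|\rho-(1+\epsilon\,\mathrm{sign}(A_{\pi_0}))|,&[\rho-(1+\epsilon\,\mathrm{sign}(A_{\pi_0}))]\cdot A_{\pi_0}\le0,\\ 0,&\text{otherwise}.\end{cases}$$ Then optimizing (maximizing) $J_{PPO}(\theta)$ is equivalent to minimizing $J'(\theta)$.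
   Context: Infinite-horizon discounted MDP with discount $\gamma\in(0,1)$, initial distribution $d_0$; $d_{\pi}(s)=\sum_{t\ge0}\gamma^t\Pr(s_t=s)$ is the unnormalized discounted state visitation under policy $\pi$; $A_{\pi_0}=Q_{\pi_0}-V_{\pi_0}$ is the advantage function of $\pi_0$. $\mathrm{clip}(x,l,u)=\min(\max(x,l),u)$. *)

(* Defs.v *)
From HB Require Import structures.
From mathcomp Require Import all_boot all_order all_algebra.
From mathcomp Require Import all_classical all_reals all_analysis.
Set Implicit Arguments. Unset Strict Implicit. Unset Printing Implicit Defensive.
Import Order.TTheory GRing.Theory Num.Theory.
Import numFieldNormedType.Exports.
Local Open Scope ring_scope.

(* Finite MDP: states S, actions A (finite types), rewards r s a,
   transition kernel P s a s' = Pr(s' | s, a), policies pi s a = pi(a|s). *)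
Section MDP.
Variables (R : realType) (S A : finType).

Definition is_policy (pi : S -> A -> R) : Prop :=
  (forall s a, 0 <= pi s a) /\ (forall s, \sum_(a : A) pi s a = 1).

Definition is_kernel (P : S -> A -> S -> R) : Prop :=
  (forall s a s', 0 <= P s a s') /\ (forall s a, \sum_(s' : S) P s a s' = 1).

Definition is_distr (mu : S -> R) : Prop :=
  (forall s, 0 <= mu s) /\ \sum_(s : S) mu s = 1.

Fixpoint state_dist (P : S -> A -> S -> R) (pi : S -> A -> R) (mu : S -> R)
    (t : nat) : S -> R :=
  match t with
  | 0 => mu
  | t'.+1 => fun s' => \sum_(s : S) state_dist P pi mu t' s *
                        \sum_(a : A) pi s a * P s a s'
  end.

Definition infsum (u : nat -> R) : R := limn (series u).

(* unnormalized discounted state visitation d_pi(s) = sum_t gamma^t Pr(s_t = s) *)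
Definition visitation (gamma : R) (P : S -> A -> S -> R) (pi : S -> A -> R)
    (d0 : S -> R) (s : S) : R :=
  infsum (fun t => gamma ^+ t * state_dist P pi d0 t s).

Definition delta (s0 : S) : S -> R := fun s => (s == s0)%:R.

Definition Vfun (gamma : R) (P : S -> A -> S -> R) (r : S -> A -> R)
    (pi : S -> A -> R) (s : S) : R :=
  infsum (fun t => gamma ^+ t *
    \sum_(s' : S) state_dist P pi (delta s) t s' *
       \sum_(a : A) pi s' a * r s' a).

Definition Qfun (gamma : R) (P : S -> A -> S -> R) (r : S -> A -> R)
    (pi : S -> A -> R) (s : S) (a : A) : R :=
  r s a + gamma * \sum_(s' : S) P s a s' * Vfun gamma P r pi s'.

Definition Afun (gamma : R) (P : S -> A -> S -> R) (r : S -> A -> R)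
    (pi : S -> A -> R) (s : S) (a : A) : R :=
  Qfun gamma P r pi s a - Vfun gamma P r pi s.

(* E_{s ~ d, a ~ pi(.|s)} [f s a]  (d unnormalized, as in the paper) *)
Definition expect_sa (d : S -> R) (pi : S -> A -> R) (f : S -> A -> R) : R :=
  \sum_(s : S) d s * \sum_(a : A) pi s a * f s a.

End MDP.

Definition clip (R : realType) (x l u : R) : R := Order.min (Order.max x l) u.

Definition ppo_obj (R : realType) (eps Adv rho : R) : R :=
  Order.min (clip rho (1 - eps) (1 + eps) * Adv) (rho * Adv).

Definition lprime (R : realType) (eps Adv rho : R) : R :=
  let c := 1 + eps * Num.sg Adv in
  if (rho - c) * Adv <= 0 then `|Adv| * `|rho - c| else 0.

Section Objectives.
Variables (R : realType) (S A : finType) (Theta : Type).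
Variables (gamma : R) (P : S -> A -> S -> R) (r : S -> A -> R) (d0 : S -> R).
Variables (pi0 : S -> A -> R) (pi : Theta -> S -> A -> R) (eps : R).

Definition rho (th : Theta) (s : S) (a : A) : R := pi th s a / pi0 s a.

Definition J_PPO (th : Theta) : R :=
  expect_sa (visitation gamma P pi0 d0) pi0
    (fun s a => ppo_obj eps (Afun gamma P r pi0 s a) (rho th s a)).

Definition J' (th : Theta) : R :=
  expect_sa (visitation gamma P pi0 d0) pi0
    (fun s a => lprime eps (Afun gamma P r pi0 s a) (rho th s a)).
End Objectives.

(* Main.v *)
Require Import Defs.
From HB Require Import structures.
From mathcomp Require Import all_boot all_order all_algebra.
From mathcomp Require Import all_classical all_reals all_analysis.
From mathcomp Require Import lra.
Import Order.TTheory GRing.Theory Num.Theory.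
Import numFieldNormedType.Exports.
Local Open Scope ring_scope.

Ltac splitall :=
  repeat (match goal with |- context[if ?c then _ else _] =>
     lazymatch c with context[if _ then _ else _] => fail | _ =>
       let h := fresh in case: (boolP c) => h;
       [|move: h; rewrite ?ltNge ?negbK -?ltNge => h] end end);
  repeat match goal with |- context[`|?x|] =>
    let hx := fresh in
    have [hx|hx] := lerP 0 x; [rewrite (ger0_norm hx)|rewrite (ltr0_norm hx)] end.

Lemma ppo_lprime (R : realType) (eps Adv rho : R) : 0 <= eps ->
  ppo_obj eps Adv rho = Adv * (1 + eps * Num.sg Adv) - lprime eps Adv rho.
Proof.
move=> he; rewrite /ppo_obj /clip /lprime /Order.min /Order.max.
have [Ap|An|->] := ltgtP Adv 0; last first.
  by rewrite sgr0 !mulr0 normr0 !mul0r lexx subr0; case: ifP.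
  by rewrite (gtr0_sg An) (gtr0_norm An); splitall; nra.
by rewrite (ltr0_sg Ap) (ltr0_norm Ap); splitall; nra.
Qed.

Theorem proposition1 (R : realType) (S A : finType) (Theta : Type)
  (gamma : R) (P : S -> A -> S -> R) (r : S -> A -> R) (d0 : S -> R)
  (pi0 : S -> A -> R) (pi : Theta -> S -> A -> R) (eps : R) :
  0 < gamma < 1 ->
  is_kernel P -> is_distr d0 ->
  is_policy pi0 -> (forall s a, 0 < pi0 s a) ->
  (forall th, is_policy (pi th)) ->
  0 < eps ->
  (forall th1 th2 : Theta,
     J_PPO gamma P r d0 pi0 pi eps th1 <= J_PPO gamma P r d0 pi0 pi eps th2 <->
     J' gamma P r d0 pi0 pi eps th2 <= J' gamma P r d0 pi0 pi eps th1) /\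
  (forall th : Theta,
     (forall th', J_PPO gamma P r d0 pi0 pi eps th' <= J_PPO gamma P r d0 pi0 pi eps th) <->
     (forall th', J' gamma P r d0 pi0 pi eps th <= J' gamma P r d0 pi0 pi eps th')).
Proof.
move=> _ _ _ _ _ _ he.
set K := expect_sa (visitation gamma P pi0 d0) pi0
  (fun s a => Afun gamma P r pi0 s a * (1 + eps * Num.sg (Afun gamma P r pi0 s a))).
have key th : J_PPO gamma P r d0 pi0 pi eps th = K - J' gamma P r d0 pi0 pi eps th.
  rewrite /J_PPO /J' /K /expect_sa -sumrB; apply: eq_bigr => s _.
  rewrite -mulrBr -sumrB; congr (_ * _); apply: eq_bigr => a _.
  by rewrite -mulrBr ppo_lprime //; apply: ltW.
split.
  by move=> th1 th2; rewrite !key; split => h; lra.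
move=> th; split=> h th'; have := h th'; rewrite !key => h'; lra.
Qed.
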